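(* Let $N\in\mathbb{N}$ with $N\ge3$ and $n\in\mathbb{N}$ with $n\ge n_N$. Then there is a real $E$ with $|E|\le\frac{2\cdot10^{-2}}{24^{N/2}}n^{-\frac{N+2}{2}}$ such that \[ e^{\frac{\pi\sqrt{24n+1}}{3\sqrt2}}=e^{2\pi\sqrt{\frac n3}}\left(\sum_{m=0}^{N+1}\frac{b(m)}{n^{\frac m2}}+E\right). \]
   Context: $n_N:=\left(\frac{3(3N+4)\log(6N+8)}{1.3^2}\right)^4$. For $m\in\mathbb{N}_0$: $e_1(0):=1$, $e_1(m):=\frac{(2m-1)!}{(-96)^m}\sum_{\nu=1}^{m}\frac{(-\pi^2/18)^\nu}{(2\nu-1)!(\nu+m)!(m-\nu)!}$ for $m\ge1$; $o_1(m):=\frac{\pi(2m)!}{24\sqrt3(-96)^m}\sum_{\nu=0}^{m}\frac{(-\pi^2/18)^\nu}{(2\nu)!(m-\nu)!(\nu+m+1)!}$; and $b(2m):=e_1(m)$, $b(2m+1):=o_1(m)$. *)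

(* Defs.v *)
From Stdlib Require Import Reals Lra Lia Factorial.
Open Scope R_scope.

Definition nN (N : nat) : R :=
  (3 * (3 * INR N + 4) * ln (6 * INR N + 8) / (13/10) ^ 2) ^ 4.

(* finite sum over nu = a .. b (inclusive); empty if b < a *)
Definition sum_range (a b : nat) (f : nat -> R) : R :=
  sum_f_R0 (fun k => f (a + k)%nat) (b - a) * (if Nat.leb a b then 1 else 0).

Definition e1 (m : nat) : R :=
  match m with
  | O => 1
  | S _ =>
    INR (fact (2 * m - 1)) / (-96) ^ m *
    sum_range 1 m (fun nu =>
      (- PI ^ 2 / 18) ^ nu /
      (INR (fact (2 * nu - 1)) * INR (fact (nu + m)) * INR (fact (m - nu))))
  end.

Definition o1 (m : nat) : R :=
  PI * INR (fact (2 * m)) / (24 * sqrt 3 * (-96) ^ m) *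
  sum_range 0 m (fun nu =>
    (- PI ^ 2 / 18) ^ nu /
    (INR (fact (2 * nu)) * INR (fact (m - nu)) * INR (fact (nu + m + 1)))).

Definition b (k : nat) : R :=
  if Nat.even k then e1 (Nat.div2 k) else o1 (Nat.div2 k).

(* Main.v *)
Require Import Defs.
From Stdlib Require Import Reals Lra Lia Arith Factorial Bool ZArith.
Open Scope R_scope.


Definition Hf (k i : nat) : R :=
  match k with
  | O => if (i =? 0)%nat then 1 else 0
  | S k' => (-1)^i * INR k * INR (fact (k' + 2*i)) /
            (2^(k+2*i) * INR (fact i) * INR (fact (k+i)))
  end.

Definition G (n k : nat) : R :=
  if andb (k <=? n)%nat (Nat.even (n - k) ) then Hf k (Nat.div2 (n - k)) else 0.

Lemma G_eq k i : G (k + 2*i) k = Hf k i.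
Proof.
  unfold G. replace (k + 2*i - k)%nat with (2*i)%nat by lia.
  rewrite Nat.even_even, Nat.div2_double.
  replace (k <=? k + 2*i)%nat with true; [reflexivity|].
  symmetry; apply Nat.leb_le; lia.
Qed.

Lemma G_odd k i : G (k + (2*i+1)) k = 0.
Proof.
  unfold G. replace (k + (2*i+1) - k)%nat with (2*i+1)%nat by lia.
  rewrite Nat.even_odd, andb_false_r. reflexivity.
Qed.

Lemma G_lt n k : (n < k)%nat -> G n k = 0.
Proof.
  intro H. unfold G. replace (k <=? n)%nat with false; [reflexivity|].
  symmetry; apply Nat.leb_gt; lia.
Qed.

Lemma fact_succ_R m n : m = S n -> INR (fact m) = INR m * INR (fact n).
Proof. intros ->. rewrite fact_simpl, mult_INR. reflexivity. Qed.

Lemma pow_eq_add (x : R) m n j : m = (n + j)%nat -> x^m = x^n * x^j.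
Proof. intros ->. apply pow_add. Qed.

Ltac nz := repeat split; try (apply pow_nonzero; lra); try apply INR_fact_neq_0;
  repeat match goal with |- context [INR ?x] => lazymatch goal with H : 0 <= INR x |- _ => fail | _ => pose proof (pos_INR x) end end;
  try lra.

Lemma HR0 K : 0 = Hf K 0 - 2 * Hf (K+1) 0.
Proof.
  destruct K as [|k].
  - simpl. field.
  - unfold Hf. replace (S k + 1)%nat with (S (S k)) by lia.
    replace (k + 2*0)%nat with k by lia.
    replace (S k + 2*0)%nat with (S k) by lia.
    replace (S (S k) + 2*0)%nat with (S (S k)) by lia.
    replace (S k + 0)%nat with (S k) by lia.
    replace (S (S k) + 0)%nat with (S (S k)) by lia.
    rewrite (fact_succ_R (S (S k)) (S k)) by lia.
    rewrite (fact_succ_R (S k) k) by lia.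
    rewrite (pow_eq_add 2 (S (S k)) (S k) 1) by lia.
    simpl fact. simpl pow.
    rewrite !S_INR. field. nz.
Qed.

Lemma HR1 K i : Hf (K+2) i = Hf K (S i) - 2 * Hf (K+1) (S i).
Proof.
  destruct K as [|k].
  - change (0+2)%nat with 2%nat. change (0+1)%nat with 1%nat. unfold Hf. cbv iota beta.
    simpl (S i =? 0)%nat. cbv iota beta.
    replace (1 + 2*i)%nat with (S (2*i)) by lia.
    replace (0 + 2 * S i)%nat with (S (S (2*i))) by lia.
    replace (2 + 2*i)%nat with (S (S (2*i))) by lia.
    replace (1 + 2 * S i)%nat with (S (S (S (2*i)))) by lia.
    replace (2 + i)%nat with (S (S i)) by lia.
    replace (1 + S i)%nat with (S (S i)) by lia.
    rewrite (fact_succ_R (S (S (2*i))) (S (2*i))) by lia.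
    rewrite (fact_succ_R (S (S i)) (S i)) by lia.
    rewrite (fact_succ_R (S i) i) by lia.
    rewrite (pow_eq_add 2 (S (S (S (2*i)))) (S (S (2*i))) 1) by lia.
    rewrite !S_INR, mult_INR. simpl pow. simpl INR.
    field. nz.
  - replace (S k + 2)%nat with (S (k+2)) by lia.
    replace (S k + 1)%nat with (S (k+1)) by lia.
    unfold Hf. cbv iota beta.
    replace (k + 2 + 2*i)%nat with (S (S (k + 2*i))) by lia.
    replace (k + 2 * S i)%nat with (S (S (k + 2*i))) by lia.
    replace (k + 1 + 2 * S i)%nat with (S (S (S (k + 2*i)))) by lia.
    replace (S (k+2) + 2*i)%nat with (S (S (S (k + 2*i)))) by lia.
    replace (S k + 2 * S i)%nat with (S (S (S (k + 2*i)))) by lia.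
    replace (S (k+1) + 2 * S i)%nat with (S (S (S (S (k + 2*i))))) by lia.
    replace (S (k+2) + i)%nat with (S (S (S (k + i)))) by lia.
    replace (S k + S i)%nat with (S (S (k + i))) by lia.
    replace (S (k+1) + S i)%nat with (S (S (S (k + i)))) by lia.
    rewrite (fact_succ_R (S (S (S (k + 2*i)))) (S (S (k + 2*i)))) by lia.
    rewrite (fact_succ_R (S (S (S (k + i)))) (S (S (k + i)))) by lia.
    rewrite (fact_succ_R (S i) i) by lia.
    rewrite (pow_eq_add 2 (S (S (S (S (k + 2*i))))) (S (S (k + 2*i))) 2) by lia.
    rewrite (pow_eq_add 2 (S (S (S (k + 2*i)))) (S (S (k + 2*i))) 1) by lia.
    rewrite !S_INR, !plus_INR, !S_INR, !mult_INR. simpl pow.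
    set (P := 2 ^ (k + (i + (i + 0)))). set (s := (-1)^i). set (F1 := INR (fact (S (S (k + 2 * i))))). set (F2 := INR (fact (S (S (k + i))))). set (F3 := INR (fact i)). simpl INR. field.
 unfold P, F2, F3; nz.
Qed.

Lemma G_rec K n : G n (K+2) = G n K - 2 * G (S n) (K+1).
Proof.
  destruct (lt_dec n K) as [Hlt|Hge].
  - rewrite !G_lt by lia. ring.
  - destruct (Nat.Even_or_Odd (n - K)) as [[j Hj]|[j Hj]].
    + replace n with (K + 2*j)%nat by lia. rewrite G_eq.
      replace (S (K + 2*j)) with ((K+1) + 2*j)%nat by lia. rewrite G_eq.
      destruct j as [|i].
      * rewrite G_lt by lia. replace (K + 2*0)%nat with K by lia. apply HR0.
      * replace (K + 2 * S i)%nat with ((K+2) + 2*i)%nat by lia. rewrite G_eq. apply HR1.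
    + replace n with (K + (2*j+1))%nat by lia. rewrite G_odd.
      replace (S (K + (2*j+1))) with ((K+1) + (2*j+1))%nat by lia. rewrite G_odd.
      destruct j as [|i].
      * rewrite G_lt by lia. ring.
      * replace (K + (2 * S i + 1))%nat with ((K+2) + (2*i+1))%nat by lia. rewrite G_odd. ring.
Qed.

Lemma G_0k k : (1 <= k)%nat -> G 0 k = 0.
Proof. intro; apply G_lt; lia. Qed.

Lemma G_n0 n : G n 0 = if (n =? 0)%nat then 1 else 0.
Proof.
  destruct (Nat.Even_or_Odd n) as [[j Hj]|[j Hj]]; subst n.
  - replace (2*j)%nat with (0 + 2*j)%nat by lia. rewrite G_eq. destruct j; reflexivity.
  - replace (2*j+1)%nat with (0 + (2*j+1))%nat by lia. rewrite G_odd.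
    replace (0 + (2*j+1) =? 0)%nat with false; [reflexivity|]. symmetry; apply Nat.eqb_neq; lia.
Qed.

Lemma term_le_sum (f : nat -> R) n i : (forall j, 0 <= f j) -> (i <= n)%nat -> f i <= sum_f_R0 f n.
Proof.
  intros Hf Hi. induction n as [|n IH].
  - replace i with 0%nat by lia. simpl. lra.
  - simpl. destruct (Nat.eq_dec i (S n)) as [->|Hne].
    + assert (0 <= sum_f_R0 f n).
      { clear IH Hi. induction n; simpl; [apply Hf|]. pose proof (Hf (S n)). lra. }
      lra.
    + pose proof (IH ltac:(lia)). pose proof (Hf (S n)). lra.
Qed.

Lemma binC_le n i : (i <= n)%nat -> Binomial.C n i <= 2^n.
Proof.
  intro Hi. replace 2 with (1+1) by lra. rewrite binomial.
  replace (Binomial.C n i) with (Binomial.C n i * 1 ^ i * 1 ^ (n - i)) by (rewrite !pow1; ring).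
  apply (term_le_sum (fun j => Binomial.C n j * 1 ^ j * 1 ^ (n - j))) ; [|lia].
  intro j. rewrite !pow1, !Rmult_1_r. unfold Binomial.C, Rdiv.
  apply Rmult_le_pos; [apply pos_INR|].
  apply Rlt_le, Rinv_0_lt_compat, Rmult_lt_0_compat; apply INR_fact_lt_0.
Qed.

Lemma pow_m1_abs i : Rabs ((-1)^i) = 1.
Proof. rewrite <- RPow_abs. replace (Rabs (-1)) with 1 by (rewrite Rabs_left; lra). apply pow1. Qed.

Lemma Hf_bound k i : (1 <= k)%nat -> Rabs (Hf k i) <= INR k / INR (k + 2*i).
Proof.
  intro Hk. destruct k as [|k']; [lia|].
  assert (HC := binC_le (S k' + 2*i) i ltac:(lia)).
  unfold Binomial.C in HC.
  replace (S k' + 2*i - i)%nat with (S k' + i)%nat in HC by lia.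
  rewrite (fact_succ_R (S k' + 2*i) (k' + 2*i)) in HC by lia.
  unfold Hf.
  assert (Hn : 0 < INR (S k' + 2*i)) by (apply lt_0_INR; lia).
  assert (HP : 0 < 2^(S k' + 2*i)) by (apply pow_lt; lra).
  pose proof (INR_fact_lt_0 (k'+2*i)). pose proof (INR_fact_lt_0 i). pose proof (INR_fact_lt_0 (S k'+i)).
  assert (Hk0 : 0 < INR (S k')) by (apply lt_0_INR; lia).
  set (X := INR (S k' + 2 * i) * INR (fact (k' + 2 * i)) / (INR (fact i) * INR (fact (S k' + i)))) in *.
  set (P := 2 ^ (S k' + 2 * i)) in *.
  assert (HX : 0 <= X) by (unfold X; apply Rmult_le_pos; [nra|]; apply Rlt_le, Rinv_0_lt_compat; nra).
  replace ((-1) ^ i * INR (S k') * INR (fact (k' + 2 * i)) / (P * INR (fact i) * INR (fact (S k' + i))))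
    with ((-1)^i * ((INR (S k') / INR (S k' + 2 * i)) * (X / P))) by (unfold X; field; lra).
  rewrite Rabs_mult, pow_m1_abs, Rmult_1_l.
  assert (HXP : X / P <= 1) by (apply Rmult_le_reg_r with P; [lra|]; unfold Rdiv; rewrite Rmult_assoc, Rinv_l by lra; lra).
  assert (0 <= INR (S k') / INR (S k' + 2 * i)) by (apply Rlt_le, Rdiv_lt_0_compat; lra).
  assert (0 <= X / P) by (unfold Rdiv; apply Rmult_le_pos; [lra|apply Rlt_le, Rinv_0_lt_compat; lra]).
  rewrite Rabs_right by (apply Rle_ge, Rmult_le_pos; lra).
  nra.
Qed.

Lemma G_bound2 n k : (1 <= n)%nat -> Rabs (G n k) <= INR k / INR n.
Proof.
  intro Hn. assert (0 < INR n) by (apply lt_0_INR; lia).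
  assert (0 <= INR k / INR n) by (apply Rmult_le_pos; [apply pos_INR| apply Rlt_le, Rinv_0_lt_compat; lra]).
  destruct (lt_dec n k) as [Hlt|Hge].
  - rewrite G_lt by lia. rewrite Rabs_R0. lra.
  - destruct k as [|k'].
    + rewrite G_n0. replace (n =? 0)%nat with false by (symmetry; apply Nat.eqb_neq; lia). rewrite Rabs_R0. lra.
    + destruct (Nat.Even_or_Odd (n - S k')) as [[j Hj]|[j Hj]].
      * replace n with (S k' + 2*j)%nat by lia. rewrite G_eq. apply Hf_bound; lia.
      * replace n with (S k' + (2*j+1))%nat by lia. rewrite G_odd, Rabs_R0.
        replace (S k' + (2*j+1))%nat with n by lia. lra.
Qed.

Lemma G_bound1 n k : Rabs (G n k) <= 1.
Proof.
  destruct (lt_dec n k) as [Hlt|Hge].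
  - rewrite G_lt by lia. rewrite Rabs_R0. lra.
  - destruct n as [|n'].
    + replace k with 0%nat by lia. rewrite G_n0. simpl. rewrite Rabs_R1. lra.
    + eapply Rle_trans; [apply G_bound2; lia|].
      assert (0 < INR (S n')) by (apply lt_0_INR; lia).
      assert (INR k <= INR (S n')) by (apply le_INR; lia).
      apply Rmult_le_reg_r with (INR (S n')); [lra|]. unfold Rdiv. rewrite Rmult_assoc, Rinv_l by lra. lra.
Qed.

Lemma Hf_S' k i : (1 <= k)%nat -> Hf k i = (-1)^i * INR k * INR (fact (k - 1 + 2*i)) /
            (2^(k+2*i) * INR (fact i) * INR (fact (k+i))).
Proof. intro. destruct k; [lia|]. unfold Hf. replace (S k - 1)%nat with k by lia. reflexivity. Qed.

Lemma m1_cases p : (-1)^p = 1 \/ (-1)^p = -1.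
Proof. induction p as [|p [H|H]]; simpl; [left; lra| right; rewrite H; lra | left; rewrite H; lra]. Qed.

Lemma pow_neg x n : (- x)^n = (-1)^n * x^n.
Proof. replace (-x) with ((-1)*x) by ring. apply Rpow_mult_distr. Qed.

Lemma e1_term (c s24 : R) j nu : c^2 = PI^2/18 -> s24^2 = 24 -> (1 <= nu <= j)%nat ->
  c^(2*nu) / INR (fact (2*nu)) * G (2*j) (2*nu) / s24^(2*j) =
  INR (fact (2*j - 1)) / (-96)^j *
  ((- PI^2/18)^nu / (INR (fact (2*nu-1)) * INR (fact (nu + j)) * INR (fact (j - nu)))).
Proof.
  intros Hc Hs Hnu.
  set (p := (j - nu)%nat).
  assert (Hj : j = (nu + p)%nat) by (unfold p; lia). clearbody p. subst j.
  replace (2 * (nu + p))%nat with (2*nu + 2*p)%nat by lia.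
  rewrite G_eq, Hf_S' by lia.
  replace (2*nu - 1 + 2*p)%nat with (2*nu + 2*p - 1)%nat by lia.
  replace (2*nu + p)%nat with (nu + (nu + p))%nat by lia.
  replace (nu + p - nu)%nat with p by lia.
  rewrite (fact_succ_R (2*nu) (2*nu-1)) by lia.
  rewrite !pow_mult, Hc.
  replace (s24^(2*nu+2*p)) with (24^(nu+p)) by (rewrite <- Hs, <- pow_mult; f_equal; lia).
  replace (2^(2*nu+2*p)) with (4^(nu+p)) by (replace 4 with (2^2) by ring; rewrite <- pow_mult; f_equal; lia).
  replace (-96) with (-(4*24)) by ring.
  replace (- PI^2/18) with (-(PI^2/18)) by field.
  rewrite !pow_neg, Rpow_mult_distr, !pow_add.
  rewrite mult_INR. simpl (INR 2).
  assert (INR nu <> 0) by (apply not_0_INR; lia).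
  pose proof (pow_lt 4 nu ltac:(lra)). pose proof (pow_lt 24 nu ltac:(lra)).
  pose proof (pow_lt 4 p ltac:(lra)). pose proof (pow_lt 24 p ltac:(lra)).
  pose proof (pow_lt 4 (nu+p) ltac:(lra)). pose proof (pow_lt 24 (nu+p) ltac:(lra)).
  pose proof (INR_fact_neq_0 (2*nu-1)). pose proof (INR_fact_neq_0 p).
  pose proof (INR_fact_neq_0 (nu+(nu+p))). pose proof (INR_fact_neq_0 (2*nu+2*p-1)).
  destruct (m1_cases p) as [E|E]; rewrite E; destruct (m1_cases nu) as [E'|E']; rewrite E';
    field; repeat split; lra.
Qed.

Lemma o1_term (c s24 s3 : R) j nu : c^2 = PI^2/18 -> s24^2 = 24 -> 0 < s3 -> 0 < s24 ->
  c * (24 * s3) = PI * (2 * s24) -> (nu <= j)%nat ->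
  c^(2*nu+1) / INR (fact (2*nu+1)) * G (2*j+1) (2*nu+1) / s24^(2*j+1) =
  PI * INR (fact (2*j)) / (24 * s3 * (-96)^j) *
  ((- PI^2/18)^nu / (INR (fact (2*nu)) * INR (fact (j - nu)) * INR (fact (nu + j + 1)))).
Proof.
  intros Hc Hs H3 H24 Hcs Hnu.
  set (p := (j - nu)%nat).
  assert (Hj : j = (nu + p)%nat) by (unfold p; lia). clearbody p. subst j.
  replace (2 * (nu + p) + 1)%nat with ((2*nu+1) + 2*p)%nat by lia.
  rewrite G_eq, Hf_S' by lia.
  replace (2*nu + 1 - 1 + 2*p)%nat with (2*(nu + p))%nat by lia.
  replace (2*nu + 1 + p)%nat with (nu + (nu + p) + 1)%nat by lia.
  replace (nu + p - nu)%nat with p by lia.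
  rewrite (fact_succ_R (2*nu+1) (2*nu)) by lia.
  assert (E1 : s24^(2*nu+1+2*p) = 24^(nu+p)*s24).
  { replace (2*nu+1+2*p)%nat with (S (2*(nu+p))) by lia. rewrite <- tech_pow_Rmult, pow_mult, Hs. ring. }
  assert (E2 : c^(2*nu+1) = (PI^2/18)^nu * c).
  { replace (2*nu+1)%nat with (S (2*nu)) by lia. rewrite <- tech_pow_Rmult, pow_mult, Hc. ring. }
  assert (E3 : 2^(2*nu+1+2*p) = 2 * 4^(nu+p)).
  { replace (2*nu+1+2*p)%nat with (S (2*(nu+p))) by lia. rewrite <- tech_pow_Rmult, pow_mult. f_equal. f_equal. ring. }
  rewrite E1, E2, E3.
  replace (-96) with (-(4*24)) by ring.
  replace (- PI^2/18) with (-(PI^2/18)) by field.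
  rewrite !pow_neg, Rpow_mult_distr, !pow_add.
  rewrite plus_INR, mult_INR. simpl (INR 2). simpl (INR 1).
  assert (Ec : c = PI * (2 * s24) / (24 * s3)) by (apply Rmult_eq_reg_r with (24*s3); [|nra]; field_simplify; lra || (rewrite <- Hcs; field; lra)).
  rewrite Ec.
  pose proof (pos_INR nu).
  pose proof (pow_lt 4 (nu+p) ltac:(lra)). pose proof (pow_lt 24 (nu+p) ltac:(lra)).
  pose proof (pow_lt 4 nu ltac:(lra)). pose proof (pow_lt 24 nu ltac:(lra)).
  pose proof (pow_lt 4 p ltac:(lra)). pose proof (pow_lt 24 p ltac:(lra)).
  pose proof (INR_fact_neq_0 (2*nu)). pose proof (INR_fact_neq_0 p).
  pose proof (INR_fact_neq_0 (nu+(nu+p)+1)). pose proof (INR_fact_neq_0 (2*(nu+p))).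
  destruct (m1_cases p) as [E|E]; rewrite E; destruct (m1_cases nu) as [E'|E']; rewrite E';
    field; repeat split; try lra.
Qed.

Lemma sum_even (f : nat -> R) j : (forall nu, f (2*nu+1)%nat = 0) ->
  sum_f_R0 f (2*j) = sum_f_R0 (fun nu => f (2*nu)%nat) j.
Proof.
  intro H. induction j as [|j IH]; [reflexivity|].
  replace (2 * S j)%nat with (S (S (2*j))) by lia. rewrite !tech5, IH.
  replace (S (2*j)) with (2*j+1)%nat by lia. rewrite H.
  replace (S (2*j+1)) with (2 * S j)%nat by lia. ring.
Qed.

Lemma sum_odd (f : nat -> R) j : (forall nu, f (2*nu)%nat = 0) ->
  sum_f_R0 f (2*j+1) = sum_f_R0 (fun nu => f (2*nu+1)%nat) j.
Proof.
  intro H. induction j as [|j IH].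
  - simpl. pose proof (H 0%nat). simpl in H0. rewrite H0. ring.
  - replace (2 * S j + 1)%nat with (S (S (2*j+1))) by lia. rewrite !tech5, IH.
    replace (S (2*j+1)) with (2*(S j))%nat by lia. rewrite H.
    replace (S (2 * S j)) with (2 * S j + 1)%nat by lia. ring.
Qed.

Lemma sum_div (f : nat -> R) n x : sum_f_R0 f n / x = sum_f_R0 (fun i => f i / x) n.
Proof. induction n; simpl; [reflexivity|]. rewrite <- IHn. unfold Rdiv. ring. Qed.

Lemma G_par_eo j nu : G (2*j) (2*nu+1) = 0.
Proof.
  destruct (lt_dec (2*j) (2*nu+1)). - apply G_lt; lia.
  - replace (2*j)%nat with ((2*nu+1) + (2*(j-nu-1)+1))%nat by lia. apply G_odd.
Qed.

Lemma G_par_oe j nu : G (2*j+1) (2*nu) = 0.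
Proof.
  destruct (lt_dec (2*j+1) (2*nu)). - apply G_lt; lia.
  - replace (2*j+1)%nat with ((2*nu) + (2*(j-nu)+1))%nat by lia. apply G_odd.
Qed.

Definition acoef (c : R) (m : nat) : R := sum_f_R0 (fun k => c^k / INR (fact k) * G m k) m.

Lemma b_conn (c s24 : R) m : c^2 = PI^2/18 -> s24^2 = 24 -> 0 < s24 ->
  c * (24 * sqrt 3) = PI * (2 * s24) -> b m = acoef c m / s24^m.
Proof.
  intros Hc Hs H24 Hcs. unfold acoef. rewrite sum_div.
  destruct (Nat.Even_or_Odd m) as [[j Hj]|[j Hj]]; subst m.
  - unfold b. rewrite Nat.even_even, Nat.div2_double.
    rewrite sum_even by (intro nu; rewrite G_par_eo; unfold Rdiv; ring).
    destruct j as [|j'].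
    + simpl. rewrite G_n0. simpl. field.
    + rewrite decomp_sum by lia. simpl pred.
      replace (G (2 * S j') (2*0)) with 0 by (rewrite G_n0; reflexivity).
      unfold e1, sum_range. replace (S j' - 1)%nat with j' by lia. simpl Nat.leb. cbv iota beta.
      rewrite Rmult_1_r, scal_sum.
      replace (c ^ (2 * 0) / INR (fact (2 * 0)) * 0 / s24 ^ (2 * S j')) with 0 by (unfold Rdiv; ring). rewrite Rplus_0_l. symmetry.
      apply sum_eq. intros i Hi.
      replace (1 + i)%nat with (S i) by lia.
      pose proof (e1_term c s24 (S j') (S i) Hc Hs ltac:(lia)) as E.
      unfold Rdiv in E |- *. rewrite E. ring.
  - unfold b. rewrite Nat.even_odd, Nat.div2_odd'.
    rewrite sum_odd by (intro nu; rewrite G_par_oe; unfold Rdiv; ring).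
    unfold o1, sum_range. replace (j - 0)%nat with j by lia. simpl Nat.leb. cbv iota beta.
    rewrite Rmult_1_r, scal_sum.
    apply sum_eq. intros i Hi. simpl (0 + i)%nat.
    pose proof (sqrt_lt_R0 3 ltac:(lra)).
    pose proof (o1_term c s24 (sqrt 3) j i Hc Hs H H24 Hcs Hi) as E.
    rewrite E. ring.
Qed.

Lemma INR_lit (n : nat) (z : Z) : Z.of_nat n = z -> INR n = IZR z.
Proof. intro H. rewrite INR_IZR_INZ, H. reflexivity. Qed.

Lemma PI_ub : PI <= 318/100.
Proof.
  destruct (Rle_lt_dec PI (318/100)) as [|H]; [auto|exfalso].
  assert (Hc : 0 < cos (159/100)) by (apply cos_gt_0; lra).
  assert (H2 := COS (159/100) ltac:(pose proof PI_RGT_0; lra) ltac:(lra)).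
  unfold cos_ub, cos_approx, cos_term in H2. cbn [sum_f_R0] in H2.
  rewrite (INR_lit (fact (2*0)) 1) in H2 by reflexivity.
  rewrite (INR_lit (fact (2*1)) 2) in H2 by reflexivity.
  rewrite (INR_lit (fact (2*2)) 24) in H2 by reflexivity.
  rewrite (INR_lit (fact (2*3)) 720) in H2 by reflexivity.
  rewrite (INR_lit (fact (2*4)) 40320) in H2 by reflexivity.
  simpl pow in H2. lra.
Qed.
From Coquelicot Require Import Coquelicot.
Open Scope R_scope.

Definition trm (u : R) (k n : nat) : R := G n k * u^n.

Lemma ex_scal (c : R) (a : nat -> R) : ex_series a -> ex_series (fun n => c * a n).
Proof. intro H. exact (ex_series_scal_l c a H). Qed.

Lemma ex_trm_abs u k : 0 <= u < 1 -> ex_series (fun n => Rabs (trm u k n)).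
Proof.
  intro Hu. apply (@ex_series_le R_AbsRing R_CompleteNormedModule _ (fun n => u^n)).
  - intro n. change (norm (Rabs (trm u k n))) with (Rabs (Rabs (trm u k n))).
    rewrite Rabs_Rabsolu. unfold trm. rewrite Rabs_mult, <- RPow_abs, (Rabs_right u) by lra.
    pose proof (G_bound1 n k). pose proof (pow_le u n ltac:(lra)).
    pose proof (Rabs_pos (G n k)). nra.
  - apply ex_series_geom. rewrite Rabs_right; lra.
Qed.

Lemma ex_trm u k : 0 <= u < 1 -> ex_series (trm u k).
Proof. intro. apply ex_series_Rabs, ex_trm_abs; auto. Qed.

Definition T u k := Series (trm u k).

Lemma T_bound u k : 0 <= u < 1 -> Rabs (T u k) <= / (1 - u).
Proof.
  intro Hu. unfold T. eapply Rle_trans; [apply Series_Rabs, ex_trm_abs; auto|].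
  rewrite <- Series_geom by (rewrite Rabs_right; lra).
  apply Series_le; [|apply ex_series_geom; rewrite Rabs_right; lra].
  intro n. split; [apply Rabs_pos|].
  unfold trm. rewrite Rabs_mult, <- RPow_abs, (Rabs_right u) by lra.
  pose proof (G_bound1 n k). pose proof (pow_le u n ltac:(lra)).
  pose proof (Rabs_pos (G n k)). nra.
Qed.

Lemma T0 u : 0 <= u < 1 -> T u 0 = 1.
Proof.
  intro Hu. unfold T. rewrite Series_incr_1 by (apply ex_trm; auto).
  unfold trm at 1. rewrite G_n0. simpl.
  rewrite (Series_ext _ (fun n => 0 * u^n)).
  - rewrite Series_scal_l. ring.
  - intro n. unfold trm. rewrite G_n0. simpl. ring.
Qed.

Lemma T_rec u K : 0 <= u < 1 -> u * T u (K+2) = u * T u K - 2 * T u (K+1).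
Proof.
  intro Hu. unfold T.
  rewrite <- Series_scal_l.
  rewrite (Series_ext _ (fun n => u * trm u K n - 2 * trm u (K+1) (S n))).
  2:{ intro n. unfold trm. rewrite G_rec. simpl pow. ring. }
  rewrite Series_minus.
  - rewrite Series_scal_l, Series_scal_l.
    rewrite (Series_incr_1 (trm u (K+1))) by (apply ex_trm; auto).
    replace (trm u (K+1) 0) with 0 by (unfold trm; rewrite G_0k by lia; ring). ring.
  - apply ex_scal, ex_trm; auto.
  - apply ex_scal. apply (ex_series_incr_1 (trm u (K+1))), ex_trm; auto.
Qed.

Lemma pow2_ge n : INR n <= 2^n.
Proof.
  induction n as [|n IH]; [simpl; lra|]. rewrite S_INR. simpl.
  pose proof (pow_le 2 n ltac:(lra)). 
  assert (1 <= 2^n) by (apply pow_R1_Rle; lra). lra.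
Qed.

Lemma T_eq u t : 0 < u <= 1/2 -> u * t^2 + 2 * t - u = 0 -> 0 <= t <= 1 ->
  forall k, T u k = t^k.
Proof.
  intros Hu Ht Ht1.
  set (d k := T u k - t^k).
  assert (Hu' : 0 <= u < 1) by lra.
  assert (drec : forall K, u * d (K+2)%nat = u * d K - 2 * d (K+1)%nat).
  { intro K. unfold d. pose proof (T_rec u K Hu') as R.
    replace (K+2)%nat with (S (S K)) in * by lia. replace (K+1)%nat with (S K) in * by lia.
    simpl pow. assert (t^K * (u * t^2 + 2 * t - u) = 0) by (rewrite Ht; ring).
    simpl pow in H. lra. }
  assert (d0 : d 0%nat = 0) by (unfold d; rewrite T0 by auto; simpl; ring).
  assert (dbound : forall k, Rabs (d k) <= 3).
  { intro k. unfold d. pose proof (T_bound u k Hu').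
    assert (/ (1 - u) <= 2) by (apply Rmult_le_reg_r with (1-u); [lra|]; rewrite Rinv_l by lra; lra).
    assert (Rabs (t^k) <= 1) by (rewrite <- RPow_abs, Rabs_right by lra; rewrite <- (pow1 k); apply pow_incr; lra).
    eapply Rle_trans; [apply Rabs_triang|]. rewrite Rabs_Ropp. lra. }
  assert (grow : forall k, 2 * Rabs (d k) <= Rabs (d (S k))).
  { induction k as [|k IH].
    - rewrite d0, Rabs_R0. pose proof (Rabs_pos (d 1%nat)). lra.
    - pose proof (drec k) as E. replace (k+2)%nat with (S (S k)) in E by lia.
      replace (k+1)%nat with (S k) in E by lia.
      assert (E2 : 2 * d (S k) = u * d k - u * d (S (S k))) by lra.
      assert (2 * Rabs (d (S k)) <= u * Rabs (d k) + u * Rabs (d (S (S k)))).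
      { replace (2 * Rabs (d (S k))) with (Rabs (2 * d (S k))) by (rewrite Rabs_mult, Rabs_right; lra).
        rewrite E2. eapply Rle_trans; [apply Rabs_triang|]. rewrite Rabs_Ropp, !Rabs_mult, Rabs_right by lra. lra. }
      pose proof (Rabs_pos (d k)). pose proof (Rabs_pos (d (S k))). pose proof (Rabs_pos (d (S (S k)))).
      nra. }
  assert (growp : forall k, 2^k * Rabs (d 1%nat) <= Rabs (d (S k))).
  { induction k as [|k IH]; [simpl; lra|]. simpl pow. pose proof (grow (S k)). nra. }
  assert (d1 : d 1%nat = 0).
  { destruct (Req_dec (d 1%nat) 0) as [|Hne]; [auto|].
    assert (Hp : 0 < Rabs (d 1%nat)) by (apply Rabs_pos_lt; auto).
    destruct (archimed_cor1 (Rabs (d 1%nat) / 3)) as [N [HN1 HN2]]; [lra|].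
    assert (0 < INR N) by (apply lt_0_INR; lia).
    assert (3 < INR N * Rabs (d 1%nat)).
    { apply Rmult_lt_compat_l with (r := INR N) in HN1; auto.
      rewrite Rinv_r in HN1 by lra. lra. }
    pose proof (growp N). pose proof (dbound (S N)). pose proof (pow2_ge N). nra. }
  assert (all0 : forall k, d k = 0 /\ d (S k) = 0).
  { induction k as [|k [IH1 IH2]]; [auto|]. split; auto.
    pose proof (drec k) as E. replace (k+2)%nat with (S (S k)) in E by lia.
    replace (k+1)%nat with (S k) in E by lia. rewrite IH1, IH2 in E.
    assert (u * d (S (S k)) = 0) by lra. apply Rmult_integral in H. destruct H; [lra|auto]. }
  intro k. destruct (all0 k) as [H _]. unfold d in H. lra.
Qed.

Lemma Series_zero : Series (fun _ => 0) = 0.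
Proof. rewrite (Series_ext _ (fun n => 0 * 1)) by (intro; ring). rewrite Series_scal_l. ring. Qed.

Lemma exp_split x M : 0 <= x < 1 -> exists ET,
  exp x = sum_f_R0 (fun k => x^k / INR (fact k)) M + ET /\ 0 <= ET <= x^(S M) / (1 - x).
Proof.
  intro Hx. set (f := fun k => x^k / INR (fact k)).
  assert (Hs : is_series f (exp x)).
  { eapply is_series_ext; [|apply (is_exp_Reals x)]. intro k. simpl. unfold f.
    change (scal (pow_n x k) (/ INR (fact k))) with (pow_n x k * / INR (fact k)).
    rewrite pow_n_pow. reflexivity. }
  assert (Hex : ex_series f) by (eexists; eauto).
  assert (Hf0 : forall k, 0 <= f k).
  { intro k. unfold f, Rdiv. apply Rmult_le_pos; [apply pow_le; lra|apply Rlt_le, Rinv_0_lt_compat, INR_fact_lt_0]. }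
  assert (Hext : ex_series (fun j => f (S M + j)%nat)) by (apply (ex_series_incr_n f (S M)); auto).
  exists (Series (fun j => f (S M + j)%nat)). split.
  - rewrite <- (is_series_unique _ _ Hs). rewrite (Series_incr_n f (S M)) by (auto; lia). reflexivity.
  - split.
    + rewrite <- Series_zero. apply Series_le; auto. intro; split; [lra|apply Hf0].
    + assert (Hg : Rabs x < 1) by (rewrite Rabs_right; lra).
      eapply Rle_trans. apply (Series_le _ (fun j => x^(S M) * x^j)).
      * intro j. split; [apply Hf0|]. unfold f. rewrite <- pow_add.
        unfold Rdiv. rewrite <- (Rmult_1_r (x^(S M + j))) at 2.
        apply Rmult_le_compat_l; [apply pow_le; lra|].
        pose proof (INR_fact_lt_0 (S M + j)).
        assert (1 <= INR (fact (S M + j))) by (apply (le_INR 1); pose proof (lt_O_fact (S M + j)); lia).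
        rewrite <- Rinv_1. apply Rinv_le_contravar; lra.
      * apply ex_scal, ex_series_geom; auto.
      * rewrite Series_scal_l, Series_geom by auto.
        unfold Rdiv. lra.
Qed.

Lemma tail_bound u t k M : 0 < u <= 1/2 -> u * t^2 + 2 * t - u = 0 -> 0 <= t <= 1 ->
  Rabs (t^k - sum_f_R0 (fun n => G n k * u^n) M) <= INR k / INR (S M) * u^(S M) / (1 - u).
Proof.
  intros Hu Ht Ht1.
  rewrite <- (T_eq u t Hu Ht Ht1 k). unfold T.
  assert (Hu' : 0 <= u < 1) by lra.
  rewrite (Series_incr_n (trm u k) (S M)) by (try lia; apply ex_trm; auto).
  simpl pred. unfold trm at 1.
  replace (sum_f_R0 (fun n : nat => G n k * u ^ n) M + Series (fun k0 : nat => trm u k (S M + k0)) -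
   sum_f_R0 (fun n : nat => G n k * u ^ n) M) with (Series (fun k0 : nat => trm u k (S M + k0))) by ring.
  assert (Hab : ex_series (fun j => Rabs (trm u k (S M + j)))).
  { apply (ex_series_incr_n (fun n => Rabs (trm u k n)) (S M)), ex_trm_abs; auto. }
  eapply Rle_trans; [apply Series_Rabs; auto|].
  assert (Hg : Rabs u < 1) by (rewrite Rabs_right; lra).
  set (K := INR k / INR (S M) * u^(S M)).
  assert (HSM : 0 < INR (S M)) by (apply lt_0_INR; lia).
  assert (HK : 0 <= K) by (unfold K; apply Rmult_le_pos; [apply Rmult_le_pos; [apply pos_INR|apply Rlt_le, Rinv_0_lt_compat; lra]|apply pow_le; lra]).
  eapply Rle_trans. apply (Series_le _ (fun j => K * u^j)).
  - intro j. split; [apply Rabs_pos|]. unfold trm, K.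
    rewrite Rabs_mult, <- RPow_abs, (Rabs_right u) by lra. rewrite pow_add.
    pose proof (G_bound2 (S M + j) k ltac:(lia)).
    assert (INR k / INR (S M + j) <= INR k / INR (S M)).
    { unfold Rdiv. apply Rmult_le_compat_l; [apply pos_INR|]. apply Rinv_le_contravar; [lra|].
      apply le_INR; lia. }
    pose proof (pow_le u (S M) ltac:(lra)). pose proof (pow_le u j ltac:(lra)).
    pose proof (Rabs_pos (G (S M + j) k)).
    assert (Rabs (G (S M + j) k) <= INR k / INR (S M)) by lra.
    assert (0 <= u ^ S M * u ^ j) by nra.
    replace (INR k / INR (S M) * u ^ S M * u ^ j) with (INR k / INR (S M) * (u ^ S M * u ^ j)) by ring.
    apply Rmult_le_compat_r; lra.
  - apply ex_scal, ex_series_geom; auto.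
  - rewrite Series_scal_l, Series_geom by auto. unfold K, Rdiv. lra.
Qed.

Lemma sum_swap (F : nat -> nat -> R) n1 n2 :
  sum_f_R0 (fun m => sum_f_R0 (fun k => F m k) n2) n1 =
  sum_f_R0 (fun k => sum_f_R0 (fun m => F m k) n1) n2.
Proof.
  induction n1 as [|n1 IH].
  - reflexivity.
  - rewrite tech5, IH, <- sum_plus. apply sum_eq. intros. rewrite tech5. reflexivity.
Qed.

Lemma sum_ext_zero (g : nat -> R) m d : (forall k, (m < k <= m + d)%nat -> g k = 0) ->
  sum_f_R0 g (m + d) = sum_f_R0 g m.
Proof.
  induction d as [|d IH]; intro H.
  - rewrite Nat.add_0_r. reflexivity.
  - replace (m + S d)%nat with (S (m + d)) by lia. rewrite tech5, IH.
    + rewrite H by lia. ring.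
    + intros; apply H; lia.
Qed.

Lemma sum_minus' (f g : nat -> R) n : sum_f_R0 f n - sum_f_R0 g n = sum_f_R0 (fun i => f i - g i) n.
Proof. induction n; [reflexivity|]. rewrite !tech5, <- IHn. ring. Qed.

Lemma Rpower_half y m : 0 < y -> Rpower y (INR m / 2) = sqrt y ^ m.
Proof.
  intro Hy. replace (INR m / 2) with (/2 * INR m) by field.
  rewrite <- Rpower_mult, Rpower_sqrt by auto. apply Rpower_pow. apply sqrt_lt_R0; auto.
Qed.

Lemma sqrt2_lb : 1414/1000 <= sqrt 2.
Proof.
  rewrite <- (sqrt_square (1414/1000)) by lra. apply sqrt_le_1_alt. lra.
Qed.

Lemma exp_c_bound c : 0 <= c <= 3/4 -> exp c <= 23/10.
Proof.
  intro Hc. assert (H4 : exp (c+c+c+c) <= exp (1+1+1)).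
  { destruct (Rle_lt_or_eq_dec (c+c+c+c) (1+1+1)) as [H|H]; [lra| |rewrite H; lra].
    left; apply exp_increasing; auto. }
  rewrite !exp_plus in H4. pose proof exp_le_3. pose proof (exp_pos 1). pose proof (exp_pos c).
  assert (exp 1 * exp 1 * exp 1 <= 27).
  { assert (exp 1 * exp 1 <= 9) by nra. nra. }
  set (e := exp c) in *. 
  destruct (Rle_lt_dec e (23/10)) as [|He]; auto.
  assert (e * e > 529/100) by nra. nra.
Qed.

Lemma ln_ge1 y : 3 <= y -> 1 <= ln y.
Proof.
  intro Hy. pose proof exp_le_3. rewrite <- (ln_exp 1).
  destruct (Rle_lt_or_eq_dec (exp 1) y) as [H0|H0]; [lra| |rewrite H0; lra].
  left. apply ln_increasing; auto. apply exp_pos.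
Qed.

Lemma Kc_bound c M : 0 <= c < 1 -> (0 < M)%nat ->
  sum_f_R0 (fun k => c^k / INR (fact k) * INR k) M <= c * exp c.
Proof.
  intros Hc HM. rewrite decomp_sum by auto.
  replace (c ^ 0 / INR (fact 0) * INR 0) with 0 by (simpl; field).
  rewrite Rplus_0_l.
  rewrite (sum_eq _ (fun i => c^i / INR (fact i) * c)).
  2:{ intros i _. rewrite (fact_succ_R (S i) i) by lia. simpl pow.
      pose proof (INR_fact_neq_0 i). assert (INR (S i) <> 0) by (apply not_0_INR; lia).
      field. auto. }
  rewrite <- scal_sum.
  destruct (exp_split c (pred M) Hc) as [ET [H1 H2]].
  apply Rmult_le_compat_l; lra.
Qed.

Theorem lemma3p12 (N n : nat) :
  (3 <= N)%nat -> nN N <= INR n ->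
  exists E : R,
    Rabs E <= (2 / 100) / Rpower 24 (INR N / 2) * Rpower (INR n) (- (INR N + 2) / 2) /\
    exp (PI * sqrt (24 * INR n + 1) / (3 * sqrt 2)) =
    exp (2 * PI * sqrt (INR n / 3)) *
      (sum_range 0 (N + 1) (fun m => b m / Rpower (INR n) (INR m / 2)) + E).
Proof.
  intros HN Hn.
  set (x := INR n) in *.
  assert (HN3 : 3 <= INR N) by (replace 3 with (INR 3) by (simpl; lra); apply le_INR; lia).
  assert (Hx : 100 <= x).
  { unfold nN in Hn. 
    assert (HL : 1 <= ln (6 * INR N + 8)) by (apply ln_ge1; lra).
    set (L := ln (6 * INR N + 8)) in *.
    assert (Hb : 4 <= 3 * (3 * INR N + 4) * L / (13 / 10) ^ 2).
    { replace ((13/10)^2) with (169/100) by (simpl; field).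
      replace (3 * (3 * INR N + 4) * L / (169 / 100)) with (3 * (3 * INR N + 4) * L * (100/169)) by field.
      nra. }
    pose proof (pow_incr 4 (3 * (3 * INR N + 4) * L / (13 / 10) ^ 2) 4 (conj (ltac:(lra) : 0 <= 4) Hb)) as H4. replace (4^4) with 256 in H4 by (simpl; lra). lra. }
  set (M := (N+1)%nat).
  set (c := PI / (3 * sqrt 2)).
  set (s24 := sqrt 24).
  assert (Hs2 : sqrt 2 * sqrt 2 = 2) by (apply sqrt_sqrt; lra).
  assert (Hs3 : sqrt 3 * sqrt 3 = 3) by (apply sqrt_sqrt; lra).
  pose proof sqrt2_lb as Hs2lb.
  assert (Hs3p : 0 < sqrt 3) by (apply sqrt_lt_R0; lra).
  assert (Hs24 : s24 = 2 * sqrt 2 * sqrt 3).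
  { unfold s24. replace 24 with ((2*2) * (2 * 3)) by ring.
    rewrite (sqrt_mult (2*2) (2*3)) by lra. rewrite (sqrt_mult 2 3) by lra. rewrite sqrt_square by lra. ring. }
  assert (Hs24p : 0 < s24) by (rewrite Hs24; nra).
  assert (Hs24sq : s24^2 = 24) by (rewrite Hs24; simpl; nra).
  pose proof PI_ub as Hpi. pose proof PI_RGT_0 as Hpi0.
  assert (Hcsq : c^2 = PI^2/18) by (unfold c; field_simplify; [rewrite ?Rmult_1_r; replace (sqrt 2 ^ 2) with 2 by (simpl; lra); field|lra]).
  assert (Hcs : c * (24 * sqrt 3) = PI * (2 * s24)).
  { rewrite Hs24. unfold c. apply Rmult_eq_reg_r with (3 * sqrt 2); [|lra].
    replace (PI / (3 * sqrt 2) * (24 * sqrt 3) * (3 * sqrt 2)) with (24 * PI * sqrt 3) by (field; lra).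
    replace (PI * (2 * (2 * sqrt 2 * sqrt 3)) * (3 * sqrt 2)) with (12 * PI * sqrt 3 * (sqrt 2 * sqrt 2)) by ring.
    rewrite Hs2. ring. }
  assert (Hc0 : 0 <= c) by (unfold c; apply Rmult_le_pos; [lra|]; apply Rlt_le, Rinv_0_lt_compat; lra).
  assert (Hc1 : c <= 3/4).
  { unfold c. apply Rmult_le_reg_r with (3 * sqrt 2); [lra|]. unfold Rdiv. rewrite Rmult_assoc, Rinv_l by lra. lra. }
  assert (Hx0 : 0 < x) by lra.
  set (A := sqrt (24*x+1)). set (B := sqrt (24*x)).
  assert (HA2 : A*A = 24*x+1) by (apply sqrt_sqrt; lra).
  assert (HB2 : B*B = 24*x) by (apply sqrt_sqrt; lra).
  assert (HB10 : 10 <= B) by (unfold B; rewrite <- (sqrt_square 10) by lra; apply sqrt_le_1_alt; lra).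
  assert (HAB : B <= A) by (apply sqrt_le_1_alt; lra).
  set (u := / B). set (t := A - B).
  assert (HuB : u * B = 1) by (unfold u; field; lra).
  assert (Hu0 : 0 < u) by (apply Rinv_0_lt_compat; lra).
  assert (Hu1 : u <= 1/10) by nra.
  assert (HtAB : t * (A + B) = 1) by (unfold t; nra).
  assert (Htq : u * t^2 + 2*t - u = 0).
  { apply Rmult_eq_reg_r with B; [|lra].
    replace ((u * t^2 + 2*t - u) * B) with ((u * B) * t^2 + 2*t*B - u * B) by ring. rewrite HuB.
    unfold t. replace (1 * (A-B)^2 + 2*(A-B)*B - 1) with (A*A - B*B - 1) by ring. rewrite HA2, HB2. ring. }
  assert (Ht0 : 0 <= t) by (unfold t; lra).
  assert (Ht1 : t <= u/2) by nra.
  assert (Hexp : PI * A / (3 * sqrt 2) = 2 * PI * sqrt (x/3) + c * t).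
  { assert (HB' : B = 6 * sqrt 2 * sqrt (x/3)).
    { unfold B. replace (24 * x) with ((6*6) * (2 * (x/3))) by field.
      rewrite (sqrt_mult (6*6) (2*(x/3))) by lra. rewrite (sqrt_mult 2 (x/3)) by lra.
      rewrite sqrt_square by lra. ring. }
    unfold t. rewrite HB'. unfold c. field. lra. }
  set (Ssum := sum_range 0 M (fun m => b m / Rpower x (INR m / 2))).
  exists (exp (c*t) - Ssum). split.
  2:{ rewrite Hexp, exp_plus. ring. }
  set (P := fun k => sum_f_R0 (fun m => G m k * u^m) M).
  assert (HBs : B = s24 * sqrt x) by (unfold B, s24; apply sqrt_mult; lra).
  assert (Hsx : 0 < sqrt x) by (apply sqrt_lt_R0; lra).
  assert (HS : Ssum = sum_f_R0 (fun k => c^k / INR (fact k) * P k) M).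
  { unfold Ssum, sum_range. replace (M - 0)%nat with M by lia.
    replace (Nat.leb 0 M) with true by reflexivity. rewrite Rmult_1_r.
    transitivity (sum_f_R0 (fun m => acoef c m * u^m) M).
    { apply sum_eq. intros m _. simpl (0 + m)%nat.
      rewrite Rpower_half by lra. rewrite (b_conn c s24 m Hcsq Hs24sq Hs24p Hcs).
      unfold u. rewrite pow_inv, HBs, Rpow_mult_distr. field.
      split; apply pow_nonzero; lra. }
    transitivity (sum_f_R0 (fun m => sum_f_R0 (fun k => c^k / INR (fact k) * G m k * u^m) M) M).
    { apply sum_eq. intros m Hm. unfold acoef. rewrite Rmult_comm, scal_sum.
      rewrite <- (sum_ext_zero _ m (M - m)).
      - replace (m + (M - m))%nat with M by lia. reflexivity.
      - intros k Hk. rewrite G_lt by lia. ring. }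
    rewrite sum_swap. apply sum_eq. intros k _. unfold P. rewrite scal_sum.
    apply sum_eq. intros m _. ring. }
  assert (Hct : 0 <= c * t < 1) by nra.
  destruct (exp_split (c*t) M Hct) as [ET [HE1 HE2]].
  rewrite HE1, HS.
  replace (sum_f_R0 (fun k => (c * t) ^ k / INR (fact k)) M + ET - sum_f_R0 (fun k => c ^ k / INR (fact k) * P k) M)
    with ((sum_f_R0 (fun k => (c * t) ^ k / INR (fact k)) M - sum_f_R0 (fun k => c ^ k / INR (fact k) * P k) M) + ET) by ring.
  rewrite sum_minus'.
  rewrite (sum_eq _ (fun k => c^k / INR (fact k) * (t^k - P k))) by (intros; rewrite Rpow_mult_distr; unfold Rdiv; ring).
  set (U := u^(S M)).
  assert (HSM : 5 <= INR (S M)) by (replace 5 with (INR 5) by (simpl; lra); apply le_INR; unfold M; lia).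
  assert (Hsum : Rabs (sum_f_R0 (fun k => c^k / INR (fact k) * (t^k - P k)) M) <=
                 sum_f_R0 (fun k => c^k / INR (fact k) * INR k) M * (U / (INR (S M) * (1 - u)))).
  { eapply Rle_trans; [apply sum_f_R0_triangle|]. rewrite (Rmult_comm (sum_f_R0 _ M)), scal_sum. apply sum_Rle. intros k _.
    rewrite Rabs_mult. rewrite (Rabs_right (c^k / INR (fact k))).
    2:{ apply Rle_ge. unfold Rdiv. apply Rmult_le_pos; [apply pow_le; lra|apply Rlt_le, Rinv_0_lt_compat, INR_fact_lt_0]. }
    assert (0 <= c^k / INR (fact k)) by (unfold Rdiv; apply Rmult_le_pos; [apply pow_le; lra|apply Rlt_le, Rinv_0_lt_compat, INR_fact_lt_0]).
    pose proof (tail_bound u t k M ltac:(lra) Htq ltac:(lra)) as TB. fold (P k) in TB. fold U in TB.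
    replace (c ^ k / INR (fact k) * INR k * (U / (INR (S M) * (1 - u)))) with
      (c ^ k / INR (fact k) * (INR k / INR (S M) * U / (1 - u))) by (field; nz).
    apply Rmult_le_compat_l; auto. }
  pose proof (Kc_bound c M ltac:(lra) ltac:(unfold M; lia)) as HK.
  pose proof (exp_c_bound c ltac:(lra)) as Hec.
  set (Kc := sum_f_R0 (fun k => c^k / INR (fact k) * INR k) M) in *.
  assert (HU : 0 < U) by (apply pow_lt; lra).
  assert (HET : ET <= U / 16).
  { eapply Rle_trans; [apply HE2|].
    assert (H1 : (c*t)^(S M) <= (u/2)^(S M)) by (apply pow_incr; nra).
    assert (H1' : (u/2)^(S M) = U * (/2)^(S M)) by (unfold U, Rdiv; apply Rpow_mult_distr).
    assert (H2 : 32 <= 2^(S M)) by (replace 32 with (2^5) by (simpl; lra); apply Rle_pow; [lra|unfold M; lia]).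
    assert (H3 : (/2)^(S M) <= /32) by (rewrite pow_inv; apply Rinv_le_contravar; lra).
    assert (Hct2 : c * t <= 1/10) by nra.
    assert (H4 : / (1 - c*t) <= 2) by (apply Rmult_le_reg_r with (1 - c*t); [lra|]; rewrite Rinv_l by lra; lra).
    unfold Rdiv. assert (0 <= (c*t)^(S M)) by (apply pow_le; lra).
    assert ((c*t)^(S M) <= U / 32).
    { rewrite H1' in H1. unfold Rdiv. pose proof (Rmult_le_compat_l U _ _ (Rlt_le _ _ HU) H3). lra. }
    assert (0 <= / (1 - c*t)) by (apply Rlt_le, Rinv_0_lt_compat; lra).
    nra. }
  assert (Htarget : (2 / 100) / Rpower 24 (INR N / 2) * Rpower x (- (INR N + 2) / 2) = 48/100 * U).
  { rewrite Rpower_half by lra. fold s24.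
    replace (- (INR N + 2) / 2) with (- (INR (N+2) / 2)) by (rewrite plus_INR; simpl; field).
    rewrite Rpower_Ropp, Rpower_half by lra. unfold U, u.
    replace (S M) with (N + 2)%nat by (unfold M; lia). rewrite pow_inv, HBs, Rpow_mult_distr, (pow_add s24), Hs24sq.
    field. split; apply pow_nonzero; lra. }
  rewrite Htarget.
  eapply Rle_trans; [apply Rabs_triang|]. rewrite (Rabs_right ET) by lra.
  assert (HKc : Kc <= 1725/1000) by nra.
  assert (Hq : U * / (INR (S M) * (1 - u)) <= U * / (45/10)).
  { apply Rmult_le_compat_l; [lra|]. apply Rinv_le_contravar; [lra|nra]. }
  replace (/ (45/10)) with (10/45) in Hq by field. unfold Rdiv in Hsum.
  assert (0 <= Kc) by (pose proof (Rabs_pos (sum_f_R0 (fun k => c^k / INR (fact k) * (t^k - P k)) M)); 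
     assert (0 <= U / (INR (S M) * (1 - u))) by (apply Rmult_le_pos; [lra|apply Rlt_le, Rinv_0_lt_compat; nra]);
     unfold Kc; apply cond_pos_sum; intro k; apply Rmult_le_pos; [unfold Rdiv; apply Rmult_le_pos; [apply pow_le; lra|apply Rlt_le, Rinv_0_lt_compat, INR_fact_lt_0]|apply pos_INR]).
  assert (0 <= U * / (INR (S M) * (1 - u))) by (apply Rmult_le_pos; [lra|apply Rlt_le, Rinv_0_lt_compat; nra]).
  nra.
Qed.
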